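(* Let $\tau(\lambda)$ denote Kendall's tau of the power-divergence copula $C_\lambda$, i.e. $\tau(\lambda)=1+4\int_0^1 \phi_\lambda(s)/\phi_\lambda'(s)\,ds$; explicitly $\tau(\lambda)=1+\frac{2}{\lambda+1}-\frac{4\lambda}{\lambda+1}\int_0^1\frac{s-1}{s^\lambda-1}\,ds$ for $\lambda\ne-1,0$, $\tau(0)=3-4\log 2$, $\tau(-1)=7-2\pi^2/3$. Then $\tau$ is a monotone non-increasing function of $\lambda\in(-\infty,\infty)$.
   Context: For $\lambda\in\mathbb{R}$ define $\phi_\lambda$ on $[0,\infty)$ by $\phi_\lambda(x)=\frac{1}{\lambda(\lambda+1)}(x^{\lambda+1}-x+\lambda(1-x))$ for $\lambda\neq-1,0$; $\phi_0(x)=1-x+x\log x$; $\phi_{-1}(x)=x-1-\log x$; values at $x=0$ are limits, so $\phi_\lambda(0)=1/(\lambda+1)$ for $\lambda>-1$ and $\phi_\lambda(0)=\infty$ for $\lambda\le-1$. On $[0,1]$, $\phi_\lambda$ is convex, strictly decreasing, $\phi_\lambda(1)=0$. The pseudoinverse is $\phi_\lambda^{[-1]}(t)=\phi_\lambda^{-1}(t)$ (inverse of $\phi_\lambda|_{[0,1]}$) for $0\le t<\phi_\lambda(0)$ and $0$ for $t\ge\phi_\lambda(0)$. The power-divergence (PD) copula is $C_\lambda(u_1,u_2)=\phi_\lambda^{[-1]}(\phi_\lambda(u_1)+\phi_\lambda(u_2))$, $u_1,u_2\in[0,1]$ (with $\phi_\lambda^{[-1]}(\infty)=0$). Kendall's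 tau of a copula $C$ is the population Kendall's tau of a random vector with distribution $C$. *)

(* Defs.v *)
From HB Require Import structures.
From mathcomp Require Import all_boot all_order all_algebra.
From mathcomp Require Import all_classical all_reals all_analysis.
Set Implicit Arguments. Unset Strict Implicit. Unset Printing Implicit Defensive.
Import Order.TTheory GRing.Theory Num.Theory.
Import numFieldNormedType.Exports.
Local Open Scope classical_set_scope.
Local Open Scope ring_scope.

(* Power-divergence generator phi_lambda on (0, oo) (the values at 0 are
   irrelevant for the integral below). *)
Definition pd_phi {R : realType} (l : R) (x : R) : R :=
  if l == 0 then 1 - x + x * ln x
  else if l == -1 then x - 1 - ln x
  else (x `^ (l + 1) - x + l * (1 - x)) / (l * (l + 1)).

Definition pd_tau {R : realType} (l : R) : R :=
  1 + 4 * Rintegral (@lebesgue_measure R) `]0, 1[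
            (fun s : R => pd_phi l s / derive1 (pd_phi l) s).

(* Main.v *)
Require Import Defs.
From HB Require Import structures.
From mathcomp Require Import all_boot all_order all_algebra.
From mathcomp Require Import all_classical all_reals all_analysis.
From mathcomp Require Import ring lra.
Import Order.TTheory GRing.Theory Num.Theory.
Import numFieldNormedType.Exports.
Local Open Scope classical_set_scope.
Local Open Scope ring_scope.

Section S.
Variable R : realType.
Lemma dext (f g : R -> R) (x df dg : R) : (forall y, f y = g y) -> df = dg ->
  is_derive x (1:R) f df -> is_derive x (1:R) g dg.
Proof.
move=> fg <- H; have -> : g = f by apply/funext => y; rewrite fg.
exact: H.
Qed.

Definition Ps (m t : R) : R := if m == 0 then t else (1 - expR (- (m * t))) / m.

Lemma Ps_derive (m t : R) : is_derive t (1:R) (Ps m) (expR (- (m * t))).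
Proof.
rewrite /Ps; have [->|m0] := eqVneq m 0.
  rewrite mul0r oppr0 expR0; exact: is_derive_id.
have h1 : is_derive t (1:R) (fun x : R => - (m * x)) (- m).
  apply: dext (is_deriveN (is_deriveZ m (is_derive_id t (1:R)))) => //.
  by rewrite /GRing.scale /= mulr1.
have h2 := is_derive1_comp (is_derive_expR _) h1.
apply: dext (is_deriveZ m^-1 (is_deriveB (is_derive_cst (1:R) t 1) h2)).
  by move=> x /=; rewrite mulrC.
rewrite /GRing.scale /=. field.
by [].
Qed.

Lemma nondec (f df : R -> R) (t : R) : 0 <= t ->
  (forall x, is_derive x (1:R) f (df x)) ->
  (forall x, 0 < x < t -> 0 <= df x) -> f 0 <= f t.
Proof.
move=> t0 hd hpos.
apply: (@ger0_derive1_ndecr R f 0 t) => //.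
- move=> x; rewrite in_itv /= => hx.
  by rewrite derive1E (@derive_val _ _ _ _ _ _ _ (hd x)); apply: hpos.
- apply: derivable_within_continuous => x _; exact: (@ex_derive _ _ _ _ _ _ _ (hd x)).
Qed.

Lemma Ps0 m : Ps m 0 = 0.
Proof. by rewrite /Ps mulr0 oppr0 expR0 subrr mul0r; case: ifP. Qed.

Lemma Ps_gt0 m t : 0 < t -> 0 < Ps m t.
Proof.
move=> t0; rewrite /Ps; have [//|m0] := eqVneq m 0.
have [mlt|mgt] := ltrP m 0.
  have -> : (1 - expR (- (m * t))) / m = (expR (- (m * t)) - 1) / (- m) by field.
  apply: divr_gt0; last by rewrite oppr_gt0.
  rewrite subr_gt0 expR_gt1; nra.
have mp : 0 < m by rewrite lt_neqAle eq_sym m0 mgt.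
apply: divr_gt0 => //; rewrite subr_gt0 expR_lt1; nra.
Qed.

Lemma key (a b t : R) : a <= b -> 0 < t ->
  Ps (a + 1) t / Ps a t <= Ps (b + 1) t / Ps b t.
Proof.
move=> ab t0.
have [->|ab'] := eqVneq a b; first by [].
have c0 : 0 < b - a by rewrite subr_gt0 lt_neqAle ab' ab.
set c := b - a.
set m := Ps (a + 1) t / Ps a t.
have m0 : 0 < m by apply: divr_gt0; apply: Ps_gt0.
set q := expR (c * ln m).
pose H x := Ps (b + 1) x - m * Ps b x - q * Ps (a + 1) x + q * m * Ps a x.
pose df x := expR (- ((b + 1) * x)) - m * expR (- (b * x)) - q * expR (- ((a + 1) * x))
   + q * m * expR (- (a * x)).
have hd : forall x, is_derive x (1:R) H (df x).
  move=> x; rewrite /H /df.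
  apply: is_deriveD; last apply: is_deriveZ (Ps_derive _ _).
  apply: is_deriveB; last apply: is_deriveZ (Ps_derive _ _).
  apply: is_deriveB; last apply: is_deriveZ (Ps_derive _ _).
  exact: Ps_derive.
have hpos : forall x, 0 < x < t -> 0 <= df x.
  move=> x _.
  have -> : df x = expR (- (a * x)) * ((expR (- (c * x)) - q) * (expR (- x) - m)).
    rewrite /df.
    have e1 : expR (- ((b + 1) * x)) = expR (- (a * x)) * expR (- (c * x)) * expR (- x).
      by rewrite -!expRD; congr expR; rewrite /c; ring.
    have e2 : expR (- (b * x)) = expR (- (a * x)) * expR (- (c * x)).
      by rewrite -!expRD; congr expR; rewrite /c; ring.
    have e3 : expR (- ((a + 1) * x)) = expR (- (a * x)) * expR (- x).
      by rewrite -!expRD; congr expR; rewrite /c; ring.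
    rewrite e1 e2 e3; ring.
  apply: mulr_ge0; first exact: expR_ge0.
  have em : m = expR (ln m) by rewrite lnK.
  have [h|h] := lerP (- x) (ln m).
    have h2 : - (c * x) <= c * ln m by rewrite -mulrN ler_pM2l.
    apply: mulr_le0; rewrite subr_le0.
      by rewrite /q ler_expR.
    by rewrite em ler_expR.
  have h2 : c * ln m <= - (c * x) by rewrite -mulrN ler_pM2l // ltW.
  apply: mulr_ge0; rewrite subr_ge0.
    by rewrite /q ler_expR.
  by rewrite em ler_expR ltW.
have := @nondec H df t (ltW t0) hd hpos.
rewrite /H !Ps0 !mulr0 !subrr addr0.
have hm : Ps (a + 1) t = m * Ps a t.
  rewrite /m mulrAC -mulrA divff ?mulr1 //; exact/lt0r_neq0/Ps_gt0.
rewrite hm -mulrA subrK subr_ge0 => h.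
have pb := @Ps_gt0 b t t0.
by rewrite ler_pdivlMr // mulrC.
Qed.



Definition Dphi (l s : R) : R :=
  if l == 0 then ln s else if l == -1 then 1 - s^-1 else (s `^ l - 1) / l.

Lemma phi_der (l s : R) : 0 < s -> is_derive s (1:R) (pd_phi l) (Dphi l s).
Proof.
move=> s0; rewrite /Dphi; have [l0|l0] := eqVneq l 0.
  apply: dext (is_deriveD (is_deriveB (is_derive_cst (1:R) s 1) (is_derive_id s 1))
                 (is_deriveM (is_derive_id s 1) (is_derive1_ln s0))).
    by move=> y; rewrite /pd_phi l0 eqxx.
  rewrite /GRing.scale /= mulr1 mulfV ?gt_eqF //; ring.
have [l1|l1] := eqVneq l (-1).
  apply: dext (is_deriveB (is_deriveB (is_derive_id s 1) (is_derive_cst (1:R) s 1))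
                 (is_derive1_ln s0)).
    by move=> y; rewrite /pd_phi (negbTE l0) l1 eqxx.
  ring.
have l10 : l + 1 != 0 by rewrite addr_eq0.
apply: dext (is_deriveZ (l * (l + 1))^-1
  (is_deriveD (is_deriveB (is_derive1_powR (l + 1) s0) (is_derive_id s 1))
     (is_deriveZ l (is_deriveB (is_derive_cst (1:R) s 1) (is_derive_id s 1))))).
  by move=> y; rewrite /pd_phi (negbTE l0) (negbTE l1) /= [RHS]mulrC.
rewrite /GRing.scale /= (_ : l + 1 - 1 = l); last by ring.
field.
by rewrite l0 l10.
Qed.

Lemma g_eq (l s : R) : 0 < s < 1 ->
  pd_phi l s / derive1 (pd_phi l) s = s - Ps (l + 1) (- ln s) / Ps l (- ln s).
Proof.
move=> /andP[s0 s1].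
have ls : ln s < 0 by apply: ln_lt0; rewrite s0 s1.
have lsn : ln s != 0 by rewrite lt_eqF.
have sn : s != 0 by rewrite gt_eqF.
have s1n : s != 1 by rewrite lt_eqF.
have els : expR (ln s) = s by rewrite lnK.
rewrite derive1E (@derive_val _ _ _ _ _ _ _ (@phi_der l s s0)) /Dphi /pd_phi /Ps.
have [l0|l0] := eqVneq l 0.
  rewrite l0 add0r oner_eq0 mul1r divr1 opprK els; field.
  exact: lsn.
have [l1|l1] := eqVneq l (-1).
  rewrite l1 addNr eqxx mulN1r opprK expRN els.
  have hs : 1 - s^-1 != 0 by rewrite subr_eq0 eq_sym invr_eq1.
  field.
  by rewrite sn subr_eq0 s1n.
have l10 : l + 1 != 0 by rewrite addr_eq0.
rewrite (negbTE l10).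
rewrite /powR (negbTE sn).
set e := expR (l * ln s).
have e1 : expR ((l + 1) * ln s) = e * s by rewrite mulrDl mul1r expRD els.
have e1' : expR (- ((l + 1) * - ln s)) = e * s by rewrite mulrN opprK.
have e2 : expR (- (l * - ln s)) = e by rewrite mulrN opprK.
rewrite e1 e1' e2.
have en : e - 1 != 0.
  rewrite subr_eq0 /e -expR0; apply/eqP => /expR_inj /eqP.
  by rewrite mulf_eq0 (negbTE l0) (negbTE lsn).
field.
by rewrite l0 l10 en -oppr_eq0 opprB en.
Qed.

Lemma Ps_le (l t : R) : 0 <= t -> Ps (l + 1) t <= Ps l t.
Proof.
move=> t0.
have := @nondec (fun x => Ps l x - Ps (l + 1) x)
  (fun x => expR (- (l * x)) - expR (- ((l + 1) * x))) t t0.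
rewrite !Ps0 subrr subr_ge0; apply.
  move=> x; exact: is_deriveB (Ps_derive _ _) (Ps_derive _ _).
move=> x /andP[x0 _]; rewrite subr_ge0 ler_expR lerN2 mulrDl mul1r lerDl ltW //.
Qed.

Definition G (l s : R) : R := s - Ps (l + 1) (- ln s) / Ps l (- ln s).

Lemma G_bound (l s : R) : 0 < s < 1 -> `|G l s| <= 1.
Proof.
move=> /andP[s0 s1].
have t0 : 0 < - ln s by rewrite oppr_gt0; apply: ln_lt0; rewrite s0 s1.
have p0 := @Ps_gt0 l _ t0. have p1 := @Ps_gt0 (l + 1) _ t0.
have E1 : Ps (l + 1) (- ln s) / Ps l (- ln s) <= 1.
  by rewrite ler_pdivrMr // mul1r Ps_le // ltW.
have E0 : 0 < Ps (l + 1) (- ln s) / Ps l (- ln s) by apply: divr_gt0.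
rewrite /G ler_norml; apply/andP; split; lra.
Qed.

Lemma G_mono (l1 l2 s : R) : l1 <= l2 -> 0 < s < 1 -> G l2 s <= G l1 s.
Proof.
move=> l12 /andP[s0 s1].
have t0 : 0 < - ln s by rewrite oppr_gt0; apply: ln_lt0; rewrite s0 s1.
rewrite /G lerD2l lerN2; exact: key.
Qed.

Lemma G_cont (l s : R) : 0 < s < 1 -> {for s, continuous (G l)}.
Proof.
move=> /andP[s0 s1].
have t0 : 0 < - ln s by rewrite oppr_gt0; apply: ln_lt0; rewrite s0 s1.
have hl : is_derive s (1:R) (fun y : R => - ln y) (- s^-1).
  exact: is_deriveN (is_derive1_ln s0).
have hP : forall m, is_derive s (1:R) (Ps m \o (fun y : R => - ln y))
   (expR (- (m * - ln s)) * - s^-1).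
  move=> m; exact: is_derive1_comp (Ps_derive _ _) hl.
have p0 : (Ps l \o (fun y : R => - ln y)) s != 0.
  by rewrite /= gt_eqF // Ps_gt0.
have hV := is_deriveV p0 (hP l).
have hM := is_deriveM (hP (l + 1)) hV.
have hB := is_deriveB (is_derive_id s (1:R)) hM.
apply: differentiable_continuous; rewrite -derivable1_diffP.
have -> : G l = ((@id R) - ((Ps (l + 1) \o (fun y : R => - ln y)) * (fun y => (Ps l (- ln y))^-1))).
  by apply/funext => y.
exact: (@ex_derive _ _ _ _ _ _ _ hB).
Qed.

Lemma in01 (s : R) : `]0, 1[%classic s -> 0 < s < 1.
Proof. by rewrite /= in_itv /=. Qed.

Lemma integrable_g (l : R) : (@lebesgue_measure R).-integrable `]0, 1[
  (EFin \o (fun s : R => pd_phi l s / derive1 (pd_phi l) s)).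
Proof.
apply: measurable_bounded_integrable.
- exact: measurable_itv.
- have := @lebesgue_measure_itv R `]0, 1[%R; rewrite /= => ->; by rewrite lte01 ltry.
- apply: (eq_measurable_fun (G l)).
    by move=> s; rewrite inE => /in01 hs; rewrite g_eq.
  apply: measurable_realfun.open_continuous_measurable_fun; first exact: itv_open.
  by move=> s; rewrite inE => /in01 hs; apply: G_cont.
- exists 1; split => // M M1 s /in01 hs /=.
  rewrite g_eq //; have h := @G_bound l s hs; rewrite /G in h; apply: (le_trans h); exact: ltW.
Qed.
End S.

Theorem proposition4 (R : realType) (l1 l2 : R) :
  l1 <= l2 -> pd_tau l2 <= pd_tau l1.
Proof.
move=> l12; rewrite /pd_tau lerD2l ler_pM2l //.
apply: le_Rintegral.
- exact: measurable_itv.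
- exact: integrable_g.
- exact: integrable_g.
- move=> s /in01 hs; rewrite !g_eq //; exact: G_mono.
Qed.
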